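(* For every $k\ge1$, $\mathfrak{L}(\mathbb{Z}^k)^w_{O(n)} \subsetneq \mathfrak{L}(\mathbb{Z}^{k+1})^w_{O(n)}$.
   Context: For a group $G$ with identity $e$, a $G$-automaton is a tuple $(Q,\Sigma,G,\delta,q_0,Q_a)$ where $Q$ is a finite set of states, $\Sigma$ a finite input alphabet, $q_0\in Q$ the initial state, $Q_a\subseteq Q$ the accepting states, and $\delta$ assigns to each $(q,\sigma)\in Q\times(\Sigma\cup\{\varepsilon\})$ a finite set of pairs $(q',m)\in Q\times G$. The register holds an element of $G$, initially $e$; using a transition $(q',m)\in\delta(q,\sigma)$ (one step) the automaton reads $\sigma$ (or nothing), moves to $q'$ and replaces the register content $x$ by $xm$. A word is accepted if some computation reads it entirely and ends in an accepting state with register equal to $e$. A $G$-automaton recognizing $\mathtt{L}$ is weakly $t(n)$ time-bounded if every $x\in\mathtt{L}$ with $|x|=n$ has an accepting computation of at most $t(n)$ steps; $\mathfrak{L}(G)^w_{O(n)}$ is the class of languages recognized by weakly $t(n)$ time-bounded $G$-automata for some $t(n)=O(n)$. $\mathbb{Z}^k$ is the additive group of integer vectors of dimension $k$. *)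

(* Defs.v *)
(* G-automata for an additive (abelian) group G : zmodType;
   the register update x |-> x m is written x + m. Z^k is 'rV[int]_k. *)
From HB Require Import structures.
From mathcomp Require Import all_boot all_order all_algebra.
Set Implicit Arguments. Unset Strict Implicit. Unset Printing Implicit Defensive.
Import GRing.Theory.
Local Open Scope ring_scope.

Record gautomaton (G : zmodType) (Sigma : finType) := GAutomaton {
  gstate : finType;
  ginit : gstate;
  gacc : {set gstate};
  gdelta : gstate -> option Sigma -> seq (gstate * G)
}.

Arguments ginit {G Sigma} g.
Arguments gacc {G Sigma} g.
Arguments gdelta {G Sigma} g _ _.

Inductive grun (G : zmodType) (Sigma : finType) (A : gautomaton G Sigma) :
  gstate A -> G -> seq Sigma -> nat -> gstate A -> G -> Prop :=
| grun_nil q x : @grun G Sigma A q x [::] 0 q x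
| grun_eps q x w n q1 m q' x' :
    (q1, m) \in gdelta A q None -> @grun G Sigma A q1 (x + m) w n q' x' ->
    @grun G Sigma A q x w n.+1 q' x'
| grun_read q x a w n q1 m q' x' :
    (q1, m) \in gdelta A q (Some a) -> @grun G Sigma A q1 (x + m) w n q' x' ->
    @grun G Sigma A q x (a :: w) n.+1 q' x'.

Arguments grun {G Sigma} A _ _ _ _ _ _.

Definition gaccepts_in (G : zmodType) (Sigma : finType) (A : gautomaton G Sigma)
  (w : seq Sigma) (n : nat) : Prop :=
  exists q', grun A (ginit A) 0 w n q' 0 /\ q' \in gacc A.

Definition gaccepts (G : zmodType) (Sigma : finType) (A : gautomaton G Sigma)
  (w : seq Sigma) : Prop := exists n, gaccepts_in A w n.

Definition grecognizes (G : zmodType) (Sigma : finType) (A : gautomaton G Sigma)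
  (L : seq Sigma -> Prop) : Prop := forall w, L w <-> gaccepts A w.

Definition weakly_time_bounded (G : zmodType) (Sigma : finType)
  (A : gautomaton G Sigma) (L : seq Sigma -> Prop) (t : nat -> nat) : Prop :=
  grecognizes A L /\
  forall w, L w -> exists n, (n <= t (size w))%N /\ gaccepts_in A w n.

Definition bigO_n (t : nat -> nat) : Prop :=
  exists c N : nat, forall n, (N <= n)%N -> (t n <= c * n)%N.

Definition in_Lw_On (G : zmodType) (Sigma : finType) (L : seq Sigma -> Prop) : Prop :=
  exists (A : gautomaton G Sigma) (t : nat -> nat),
    bigO_n t /\ weakly_time_bounded A L t.

(* Main.v *)
Require Import Defs.
From mathcomp Require Import all_boot all_order all_algebra zify.
From Stdlib Require Import ClassicalEpsilon Classical.
Set Implicit Arguments. Unset Strict Implicit.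
Import GRing.Theory.
Section Runs.
Variables (G : zmodType) (Sigma : finType) (A : gautomaton G Sigma).

Lemma grun_cat q x u n1 qm xm v n2 q' x' :
  grun A q x u n1 qm xm -> grun A qm xm v n2 q' x' ->
  grun A q x (u ++ v) (n1 + n2) q' x'.
Proof.
elim=> [q0 x0|q0 x0 w n q1 m q2 x2 H _ IH|q0 x0 a w n q1 m q2 x2 H _ IH] Hv //=.
- by rewrite addSn; apply: grun_eps H (IH Hv).
- by rewrite addSn; apply: grun_read H (IH Hv).
Qed.

Lemma grun_split q x u v n q' x' :
  grun A q x (u ++ v) n q' x' ->
  exists n1 n2 qm xm, n = (n1 + n2)%N /\ grun A q x u n1 qm xm /\
     grun A qm xm v n2 q' x'.
Proof.
move Ew: (u ++ v) => w H; elim: H u Ew =>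
  [q0 x0|q0 x0 w0 n0 q1 m q2 x2 H _ IH|q0 x0 a w0 n0 q1 m q2 x2 H R IH] u Ew.
- case: u Ew => //= ->.
  by exists 0%N, 0%N, q0, x0; split=> //; split; constructor.
- have [n1 [n2 [qm [xm [-> [H1 H2]]]]]] := IH u Ew.
  exists n1.+1, n2, qm, xm; split=> //; split=> //; exact: grun_eps H H1.
- case: u Ew => [|b u] /= Ew.
  + subst v; exists 0%N, n0.+1, q0, x0; split=> //; split; first constructor.
    exact: grun_read H R.
  + case: Ew => -> Ew.
    have [n1 [n2 [qm [xm [-> [H1 H2]]]]]] := IH u Ew.
    exists n1.+1, n2, qm, xm; split=> //; split=> //; exact: grun_read H H1.
Qed.

End Runs.
Section S2.
Local Open Scope ring_scope.

Definition phi k (v : 'rV[int]_k) : 'rV[int]_k.+1 :=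
  \row_(j < k.+1) (if unlift ord0 j is Some j' then v 0 j' else 0).

Lemma phiD k (u v : 'rV[int]_k) : phi (u + v) = phi u + phi v.
Proof. by apply/matrixP=> i j; rewrite !mxE; case: unlift => [j'|]; rewrite ?mxE ?addr0. Qed.

Lemma phi_inj k : injective (@phi k).
Proof.
move=> u v E; apply/matrixP=> i j; rewrite [i]ord1.
by have := congr1 (fun M : 'rV[int]_k.+1 => M 0 (lift ord0 j)) E; rewrite /= !mxE liftK.
Qed.

Lemma phi0 k : phi (0 : 'rV[int]_k) = 0.
Proof. by apply/matrixP=> i j; rewrite !mxE; case: unlift => [j'|]; rewrite ?mxE. Qed.

Definition liftA k (Sigma : finType) (A : gautomaton 'rV[int]_k Sigma) :
  gautomaton 'rV[int]_k.+1 Sigma :=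
  @GAutomaton _ Sigma (gstate A) (ginit A) (gacc A)
    (fun q o => [seq (p.1, phi p.2) | p <- gdelta A q o]).

Section Lift.
Variables (k : nat) (Sigma : finType) (A : gautomaton 'rV[int]_k Sigma).

Lemma liftA_fwd q x w n q' x' : grun A q x w n q' x' ->
  grun (liftA A) q (phi x) w n q' (phi x').
Proof.
elim=> [q0 x0|q0 x0 w0 n0 q1 m q2 x2 H _ IH|q0 x0 a w0 n0 q1 m q2 x2 H _ IH].
- constructor.
- apply: (@grun_eps _ _ (liftA A) _ _ _ _ q1 (phi m)); last by rewrite -phiD.
  by apply/mapP; exists (q1, m).
- apply: (@grun_read _ _ (liftA A) _ _ _ _ _ q1 (phi m)); last by rewrite -phiD.
  by apply/mapP; exists (q1, m).
Qed.

Lemma liftA_bwd q y w n q' y' : grun (liftA A) q y w n q' y' ->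
  forall x, y = phi x -> exists x', y' = phi x' /\ grun A q x w n q' x'.
Proof.
elim=> [q0 x0|q0 x0 w0 n0 q1 m q2 x2 H _ IH|q0 x0 a w0 n0 q1 m q2 x2 H _ IH] x Ex.
- by exists x; split=> //; constructor.
- case/mapP: H => [[q3 m3]] Hm [Eq Em]; subst q1 m.
  have E1 : x0 + phi m3 = phi (x + m3) by rewrite phiD Ex.
  have [x' [E' R]] := IH (x + m3) E1.
  by exists x'; split=> //; apply: grun_eps Hm R.
- case/mapP: H => [[q3 m3]] Hm [Eq Em]; subst q1 m.
  have E1 : x0 + phi m3 = phi (x + m3) by rewrite phiD Ex.
  have [x' [E' R]] := IH (x + m3) E1.
  by exists x'; split=> //; apply: grun_read Hm R.
Qed.

Lemma liftA_acc w n : gaccepts_in A w n <-> gaccepts_in (liftA A) w n.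
Proof.
split=> [[q' [R Hq]]|[q' [R Hq]]].
- by exists q'; split=> //; have := liftA_fwd R; rewrite phi0.
- have [x' [E' R']] := liftA_bwd R (esym (phi0 k)).
  exists q'; split=> //; suff E : x' = 0 by rewrite E in R'.
  by apply: phi_inj; rewrite -E' phi0.
Qed.
End Lift.

Lemma part1 k (Sigma : finType) (L : seq Sigma -> Prop) :
  in_Lw_On 'rV[int]_k L -> in_Lw_On 'rV[int]_k.+1 L.
Proof.
case=> A [t [Ht [Hr Hb]]]; exists (liftA A), t; split=> //; split.
- rewrite /grecognizes in Hr *.
  move=> w; split=> [/Hr [n Hn]|[n Hn]]; first by exists n; exact: (proj1 (liftA_acc A w n) Hn).
  by apply/Hr; exists n; exact: (proj2 (liftA_acc A w n) Hn).
- move=> w /Hb [n [Hn Ha]]; exists n; split=> //; exact: (proj1 (liftA_acc A w n) Ha).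
Qed.
End S2.
Section S3.
Local Open Scope ring_scope.

Definition Sig k : finType := ('I_k.+1 + 'I_k.+1)%type.
Definition Lk k (w : seq (Sig k)) : Prop :=
  forall i, count_mem (inl i) w = count_mem (inr i) w.

Definition lv k (a : Sig k) : 'rV[int]_k.+1 :=
  match a with inl i => delta_mx 0 i | inr i => - delta_mx 0 i end.

Definition Cnt k : gautomaton 'rV[int]_k.+1 (Sig k) :=
  @GAutomaton _ (Sig k) unit tt setT
    (fun _ o => match o with Some a => [:: (tt, lv a)] | None => [::] end).

Lemma Cnt_run k q x w n q' x' : grun (Cnt k) q x w n q' x' ->
  n = size w /\ forall j, x' 0 j = x 0 j + (count_mem (inl j) w)%:Z
                                           - (count_mem (inr j) w)%:Z.
Proof.
elim=> [q0 x0|q0 x0 w0 n0 q1 m q2 x2 H _ IH|q0 x0 a w0 n0 q1 m q2 x2 H _ IH].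
- by split=> // j; rewrite /= subr0 addr0.
- by [].
- case: IH => -> IH; split=> // j; rewrite IH.
  move: H; rewrite inE => /eqP [_ ->].
  case: a => i; rewrite /= !mxE /=.
  + have -> : (inl i == inl j :> Sig k) = (j == i).
      by apply/eqP/eqP => [[->]|->].
    case: (j == i); rewrite /=; lia.
  + have -> : (inr i == inr j :> Sig k) = (j == i).
      by apply/eqP/eqP => [[->]|->].
    case: (j == i); rewrite /=; lia.
Qed.

Lemma Cnt_ex k x w : exists x', grun (Cnt k) tt x w (size w) tt x'.
Proof.
elim: w x => [|a w IH] x; first by exists x; constructor.
have [x' R] := IH (x + lv a); exists x'.
by apply: (@grun_read _ _ (Cnt k) _ _ _ _ _ tt (lv a)) => //; rewrite inE.
Qed.

Lemma Cnt_rec k : weakly_time_bounded (Cnt k) (@Lk k) id.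
Proof.
have key : forall w, Lk w -> gaccepts_in (Cnt k) w (size w).
  move=> w Hw; have [x' R] := Cnt_ex 0 w; exists tt; split; last by rewrite inE.
  suff E : x' = 0 by rewrite E in R.
  by have [_ V] := Cnt_run R; apply/matrixP=> i j; rewrite [i]ord1 V (Hw j) !mxE add0r subrr.
rewrite /weakly_time_bounded /grecognizes; split; last first.
  by move=> w /key Hw; exists (size w).
move=> w; split; first by move=> /key Hw; exists (size w).
by case=> n [q' [R _]] i; have [_ V] := Cnt_run R; have := V i; rewrite !mxE add0r => /eqP; rewrite eq_sym subr_eq0 eqz_nat => /eqP.
Qed.
End S3.
Lemma Mbound k (Sigma : finType) (A : gautomaton 'rV[int]_k Sigma) :
  exists M : nat, forall q o q1 m, (q1, m) \in gdelta A q o ->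
    forall j, (absz (m ord0 j) <= M)%N.
Proof.
exists (\max_q \max_o \max_(p <- gdelta A q o) \max_j absz (p.2 ord0 j)).
move=> q o q1 m H j.
apply: leq_trans (leq_bigmax q).
apply: leq_trans (leq_bigmax o).
apply: leq_trans (leq_bigmax_seq _ H _) => //.
exact: (leq_bigmax (F := fun j => absz (m ord0 j))).
Qed.

Lemma reg_bound k (Sigma : finType) (A : gautomaton 'rV[int]_k Sigma) (M : nat) :
  (forall q o q1 m, (q1, m) \in gdelta A q o -> forall j, (absz (m ord0 j) <= M)%N) ->
  forall q x w n q' x', grun A q x w n q' x' ->
  forall j, (absz (x' ord0 j) <= absz (x ord0 j) + n * M)%N.
Proof.
move=> HM q x w n q' x'.
elim=> [q0 x0|q0 x0 w0 n0 q1 m q2 x2 H _ IH|q0 x0 a w0 n0 q1 m q2 x2 H _ IH] j.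
- by rewrite addn0.
- have := IH j; have := HM _ _ _ _ H j; rewrite !mxE mulSn; move: (n0 * M) (x0 ord0 j) (m ord0 j) (x2 ord0 j) => K a1 b1 c1; lia.
- have := IH j; have := HM _ _ _ _ H j; rewrite !mxE mulSn; move: (n0 * M) (x0 ord0 j) (m ord0 j) (x2 ord0 j) => K a1 b1 c1; lia.
Qed.

Lemma count_fl (T : Type) (a : pred T) m (f : 'I_m -> nat) (h : 'I_m -> T) :
  count a (flatten [seq nseq (f i) (h i) | i <- enum 'I_m]) = (\sum_(i < m) a (h i) * f i)%N.
Proof.
rewrite count_flatten -map_comp sumnE big_map big_enum /=.
by apply: eq_bigr => i _; rewrite count_nseq.
Qed.

Lemma expn_mono a b e : (a <= b -> a ^ e <= b ^ e)%N.
Proof. by move=> h; elim: e => // e IH; rewrite !expnS leq_mul. Qed.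
Lemma card_ineq (Q E n B k : nat) : n = (Q * E^k)%N -> (B.+1 <= n.+1 * E)%N -> (Q * B.+1 ^ k < n.+1 ^ k.+1)%N.
Proof.
move=> En HB.
have h1 : (B.+1 ^ k <= n.+1 ^ k * E ^ k)%N by rewrite -expnMn expn_mono.
have h2 : (0 < n.+1 ^ k)%N by rewrite expn_gt0.
rewrite expnS.
apply: (@leq_ltn_trans (Q * (n.+1 ^ k * E ^ k))); first by rewrite leq_mul2l h1 orbT.
by rewrite mulnCA -En mulnC ltn_pmul2r.
Qed.

Section Words.
Variables (k n : nat).
Definition xw (p : {ffun 'I_k.+1 -> 'I_n.+1}) : seq (Sig k) :=
  flatten [seq nseq (p i) (inl i : Sig k) | i <- enum 'I_k.+1].
Definition yw (p : {ffun 'I_k.+1 -> 'I_n.+1}) : seq (Sig k) :=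
  flatten [seq nseq (p i) (inr i : Sig k) | i <- enum 'I_k.+1].

Lemma eq_ll (i j : 'I_k.+1) : (inl i == inl j :> Sig k) = (i == j).
Proof. by apply/eqP/eqP => [[->]|->]. Qed.
Lemma eq_rr (i j : 'I_k.+1) : (inr i == inr j :> Sig k) = (i == j).
Proof. by apply/eqP/eqP => [[->]|->]. Qed.
Lemma eq_lr (i j : 'I_k.+1) : (inl i == inr j :> Sig k) = false.
Proof. by apply/eqP. Qed.
Lemma eq_rl (i j : 'I_k.+1) : (inr i == inl j :> Sig k) = false.
Proof. by apply/eqP. Qed.

Lemma cnt_xl p i : count_mem (inl i) (xw p) = p i.
Proof.
rewrite count_fl (bigD1 i) //= eq_ll eqxx mul1n big1 ?addn0 // => j /negbTE ne.
by rewrite /= eq_ll ne.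
Qed.
Lemma cnt_xr p i : count_mem (inr i) (xw p) = 0%N.
Proof. by rewrite count_fl big1 // => j _; rewrite /= eq_lr. Qed.
Lemma cnt_yr p i : count_mem (inr i) (yw p) = p i.
Proof.
rewrite count_fl (bigD1 i) //= eq_rr eqxx mul1n big1 ?addn0 // => j /negbTE ne.
by rewrite /= eq_rr ne.
Qed.
Lemma cnt_yl p i : count_mem (inl i) (yw p) = 0%N.
Proof. by rewrite count_fl big1 // => j _; rewrite /= eq_rl. Qed.

Lemma size_fl (T : Type) (h : 'I_k.+1 -> T) (p : {ffun 'I_k.+1 -> 'I_n.+1}) :
  (size (flatten [seq nseq (p i) (h i) | i <- enum 'I_k.+1]) <= k.+1 * n)%N.
Proof.
rewrite -count_predT count_fl.
apply: (@leq_trans (\sum_(i < k.+1) n)); last by rewrite sum_nat_const card_ord.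
by apply: leq_sum => i _; rewrite /= mul1n -ltnS ltn_ord.
Qed.

Lemma size_xy p p' : (size (xw p ++ yw p') <= 2 * (k.+1 * n))%N.
Proof.
have h1 : (size (xw p) <= k.+1 * n)%N by exact: size_fl.
have h2 : (size (yw p') <= k.+1 * n)%N by exact: size_fl.
rewrite size_cat; lia.
Qed.

Lemma L_xy p p' : Lk (xw p ++ yw p') <-> p = p'.
Proof.
split=> [H|<- i]; last by rewrite !count_cat cnt_xl cnt_xr cnt_yl cnt_yr addn0.
apply/ffunP=> i; apply/val_inj; have := H i.
by rewrite !count_cat cnt_xl cnt_xr cnt_yl cnt_yr addn0.
Qed.
End Words.

Lemma lower k : ~ in_Lw_On 'rV[int]_k (@Lk k).
Proof.
case=> A [t [[c [N Hc]] [Hr Hb]]].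
have [M HM] := Mbound A.
pose D := (\max_(l < N) t l)%N.
have Ht : forall l, (t l <= c * l + D)%N.
  move=> l; case: (leqP N l) => [/Hc h | h]; first by apply: leq_trans h (leq_addr _ _).
  have := leq_bigmax (F := fun l : 'I_N => t l) (Ordinal h); rewrite /= -/D; lia.
pose E := (4*M*c*k.+1 + 2*M*D + 1)%N.
pose n := (#|gstate A| * E^k)%N.
pose B := ((c * (2 * (k.+1 * n)) + D) * M)%N.
pose X := {ffun 'I_k.+1 -> 'I_n.+1}.
pose C := (gstate A * {ffun 'I_k -> 'I_(2*B).+1})%type.
pose enc (v : 'rV[int]_k) : {ffun 'I_k -> 'I_(2*B).+1} :=
  [ffun j => inord (absz (v ord0 j + (B%:Z))%R)].
have enc_inj : forall v v' : 'rV[int]_k, (forall j, absz (v ord0 j) <= B)%N ->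
    (forall j, absz (v' ord0 j) <= B)%N -> enc v = enc v' -> v = v'.
  move=> v v' hv hv' E1; apply/matrixP => i j; rewrite [i]ord1.
  have := congr1 (fun f : {ffun 'I_k -> 'I_(2*B).+1} => (f j : nat)) E1; rewrite /= !ffunE.
  move: (hv j) (hv' j); move: (v ord0 j) (v' ord0 j) => a b ha hb.
  rewrite !inordK; lia.
have spec : forall p : X, exists cfg : C, exists xm s1 s2 qf,
    grun A (ginit A) 0%R (xw p) s1 cfg.1 xm /\ grun A cfg.1 xm (yw p) s2 qf 0%R /\
    qf \in gacc A /\ (forall j, absz (xm ord0 j) <= B)%N /\ cfg.2 = enc xm.
  move=> p; have Lp : Lk (xw p ++ yw p) by apply/L_xy.
  have [s [Hs [qf [R Hqf]]]] := Hb _ Lp.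
  have [s1 [s2 [qm [xm [Es [R1 R2]]]]]] := grun_split R.
  exists (qm, enc xm), xm, s1, s2, qf; do 4 (split=> //).
  move=> j; have := reg_bound HM R1 j; rewrite mxE /= add0n => h.
  apply: leq_trans h _; rewrite /B leq_mul2r; apply/orP; right.
  apply: (@leq_trans s); first by rewrite Es leq_addr.
  apply: leq_trans Hs _; apply: leq_trans (Ht _) _.
  by rewrite leq_add2r leq_mul2l size_xy orbT.
pose F (p : X) : C := proj1_sig (constructive_indefinite_description _ (spec p)).
have HF : forall p, exists xm s1 s2 qf,
    grun A (ginit A) 0%R (xw p) s1 (F p).1 xm /\ grun A (F p).1 xm (yw p) s2 qf 0%R /\
    qf \in gacc A /\ (forall j, absz (xm ord0 j) <= B)%N /\ (F p).2 = enc xm.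
  move=> p; exact: (proj2_sig (constructive_indefinite_description _ (spec p))).
have ninj : ~ injective F.
  move/leq_card; rewrite card_prod !card_ffun !card_ord.
  apply/negP; rewrite -ltnNge; apply: card_ineq; first by [].
  rewrite /E /B; nia.
have [p [p' [Epp ne]]] : exists p p', F p = F p' /\ p <> p'.
  apply: NNPP => Hn; apply: ninj => p p' Ep; apply: NNPP => nep; apply: Hn.
  by exists p, p'.
apply: ne; apply/(L_xy (n := n)); apply/Hr.
have [xm [s1 [s2 [qf [R1 [R2 [Hq [Bm Em]]]]]]]] := HF p.
have [xm' [s1' [s2' [qf' [R1' [R2' [Hq' [Bm' Em']]]]]]]] := HF p'.
have exm : xm = xm' by apply: enc_inj => //; rewrite -Em -Em' Epp.
rewrite -Epp -exm in R2'.
exists (s1 + s2')%N, qf'; split=> //; exact: grun_cat R1 R2'.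
Qed.

Theorem theorem4p11 (k : nat) (hk : (1 <= k)%N) :
  (forall (Sigma : finType) (L : seq Sigma -> Prop),
      in_Lw_On 'rV[int]_k L -> in_Lw_On 'rV[int]_k.+1 L) /\
  (exists (Sigma : finType) (L : seq Sigma -> Prop),
      in_Lw_On 'rV[int]_k.+1 L /\ ~ in_Lw_On 'rV[int]_k L).
Proof.
split; first exact: part1.
exists (Sig k), (@Lk k); split; last exact: lower.
exists (Cnt k), id; split; last exact: Cnt_rec.
by exists 1%N, 0%N => m _; rewrite mul1n.
Qed.
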